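(* Let $T$ be a lifted graph, $F\colon T\to T$ a continuous sun-like map of degree 1, ${\cal P}$ a basic partition of $F$ and ${\cal G}$ its covering graph. (i) Let $\gamma_1,\gamma_2$ be two loops in ${\cal G}$ starting at the same vertex $\alpha$. If $r\in[\rho(\widetilde\gamma_1),\rho(\widetilde\gamma_2)]\cap\mathbb Q$, then there exists a loop $\gamma$ starting at $\alpha$ with $\rho(\widetilde\gamma)=r$. (ii) Let $\alpha$ be a vertex of ${\cal G}$ and, for every $n\ge0$, let $\gamma_n$ be a loop in ${\cal G}$ starting at $\alpha$. If $\lim_{n\to\infty}\rho(\widetilde\gamma_n)=s\in\mathbb R$, then there exists an infinite path $\bar\alpha=(\alpha_n)_{n\ge0}$ in ${\cal G}$ with $\alpha_0=\alpha$, $\alpha_n=\alpha$ for infinitely many $n$, and $\rho(\bar\alpha)=s$.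
   Context: A lifted graph is a connected topological space $T$ with a homeomorphism $h\colon\mathbb R\to h(\mathbb R)\subset T$ and a homeomorphism $\tau\colon T\to T$ such that $\tau(h(x))=h(x+1)$, the closure of each connected component of $T\setminus h(\mathbb R)$ is a topological finite graph meeting $h(\mathbb R)$ in exactly one point, and only finitely many such components have closure meeting $h([0,1])$. Identify $h(\mathbb R)$ with $\mathbb R$, write $x+m:=\tau^m(x)$; $r_{\mathbb R}\colon T\to\mathbb R$ is the identity on $\mathbb R$ and maps a component $C$ of $T\setminus\mathbb R$ to the point $\overline C\cap\mathbb R$. $F$ has degree 1 if $F(x+1)=F(x)+1$. Let $T_{\mathbb R}:=\overline{\bigcup_{n\ge0}F^n(\mathbb R)}$, $X:=\overline{T\setminus T_{\mathbb R}}\cap r_{\mathbb R}^{-1}([0,1))$. $F$ is sun-like if $(T\setminus T_{\mathbb R})\cap r_{\mathbb R}^{-1}([0,1))$ consists of finitely many intervals with pairwise disjoint closures $X^i$, $i\in\Lambda$ (branches), each a compact interval meeting $T_{\mathbb R}$ in one endpoint $\min X^i$ (fixing the order of $X^i$). A basic partition is a finite family ${\cal P}=\{X^i_j\}$ of pairwise disjoint nonempty compact intervals $X^i_1<\dots<X^i_{N_i}$ in $X^i$, with $\ell(X^i_j)\in\Lambda$, $p(X^i_j)\in\mathbb Z$, such that $F(X^i_j)\subset(X^{\ell(X^i_j)}+p(X^i_j))\cup\mathrm{Int}(T_{\mathbb R})$, $F(\min X^i_j)=\min X^{\ell(X^i_j)}+p(X^i_j)$, and $F(X\setminus\bigcup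 X^i_j)\cap(X+\mathbb Z)=\emptyset$. For $A_0,\dots,A_n\in{\cal P}$, $\langle A_0\dots A_n\rangle:=F^n(\{x\in T: F^i(x)\in A_i+\mathbb Z,\ 0\le i\le n\})\cap X$. $A_0\dots A_n\sim B_0\dots B_m$ iff for some $k\le\min(n,m)$, $A_{n-i}=B_{m-i}$ ($0\le i\le k$) and $\langle A_0\dots A_{n-k}\rangle=A_{n-k}=B_{m-k}=\langle B_0\dots B_{m-k}\rangle$. The covering graph ${\cal G}$: vertices are classes $A_0\dots A_n/\!\sim$ with $\langle A_0\dots A_n\rangle\ne\emptyset$; arrow $\alpha\to\beta$ iff $\alpha=A_0\dots A_n/\!\sim$, $\beta=A_0\dots A_nA_{n+1}/\!\sim$ for some $A_i\in{\cal P}$. The weight of an arrow $\alpha\to\beta$ is $W(\alpha\beta):=p(A)$ with $A\in{\cal P}$ the unique element containing $\langle\alpha\rangle$. A finite path $\alpha_0\dots\alpha_n$ ($\alpha_i\to\alpha_{i+1}$) has length $n$ and weight $W(\alpha_0\dots\alpha_n):=\sum_{i<n}W(\alpha_i\alpha_{i+1})$; a loop starting at $\alpha$ is a finite path of positive length with $\alpha_0=\alpha_n=\alpha$; $\widetilde\gamma$ denotes the infinite path obtained by concatenating the loop $\gamma$ with itself infinitely many times. For an infinite path $\bar\alpha=(\alpha_n)_{n\ge0}$, $\rho(\bar\alpha):=\lim_{n\to\infty}W(\alpha_0\dots\alpha_n)/n$ when the limit exists. *)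

(* Defs.v *)
(* The real line is an arbitrary realType R
   (every realType is isomorphic to the reals). *)
From HB Require Import structures.
From mathcomp Require Import all_boot all_order all_algebra.
From mathcomp Require Import all_classical all_reals all_analysis.
Set Implicit Arguments. Unset Strict Implicit. Unset Printing Implicit Defensive.
Import Order.TTheory GRing.Theory Num.Theory.
Import numFieldTopology.Exports numFieldNormedType.Exports.
Local Open Scope classical_set_scope.
Local Open Scope ring_scope.

Section LiftedGraphs.
Variables (R : realType) (T : topologicalType).

Definition I01 : set R := [set t | 0 <= t <= 1].
Definition I01l : set R := [set t | 0 < t <= 1].

Definition embedding_on (D : set R) (f : R -> T) : Prop :=
  [/\ (forall x y, D x -> D y -> f x = f y -> x = y),
      {within D, continuous f} &
      (forall U : set R, open U ->
         exists V : set T, open V /\ f @` (U `&` D) = V `&` f @` D)].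

Definition topological_finite_graph (G : set T) : Prop :=
  exists (V : seq T) (m : nat) (E : 'I_m -> R -> T),
    [/\ (forall e, embedding_on I01 (E e)),
        (forall e, (E e 0) \in V /\ (E e 1) \in V),
        (forall e t, 0 < t < 1 -> E e t \notin V),
        (forall i j, i <> j -> forall s t, 0 < s < 1 -> 0 < t < 1 ->
             E i s <> E j t) &
        G = [set x | x \in V] `|` \bigcup_(e in [set: 'I_m]) (E e @` I01)].

Definition homeomorphism (tau : T -> T) : Prop :=
  [/\ bijective tau, continuous tau & (forall U : set T, open U -> open (tau @` U))].

Definition comp (h : R -> T) (x : T) : set T :=
  connected_component (~` range h) x.

Definition lifted_graph (h : R -> T) (tau : T -> T) : Prop :=
  connected [set: T] /\
  [/\ embedding_on setT h,
      homeomorphism tau,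
      (forall x, tau (h x) = h (x + 1)),
      (forall x, ~ range h x ->
          topological_finite_graph (closure (comp h x)) /\
          exists y, closure (comp h x) `&` range h = [set h y]) &
      finite_set [set C : set T | exists x, ~ range h x /\ C = comp h x /\
                     closure C `&` (h @` I01) !=set0] ].

(* r_R t = x *)
Definition rR (h : R -> T) (x : R) (t : T) : Prop :=
  t = h x \/ (~ range h t /\ closure (comp h t) (h x)).

(* y = x + m, i.e. y = tau^m x, for m : int *)
Definition zshift (tau : T -> T) (m : int) (x y : T) : Prop :=
  (exists n : nat, m = n%:Z /\ y = iter n tau x) \/
  (exists n : nat, m = - n%:Z /\ x = iter n tau y).

Definition shiftset (tau : T -> T) (A : set T) (m : int) : set T :=
  [set y | exists2 x, A x & zshift tau m x y].

Definition Zorbit (tau : T -> T) (A : set T) : set T :=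
  \bigcup_(m in [set: int]) shiftset tau A m.

Definition degree_one (tau F : T -> T) : Prop := forall x, F (tau x) = tau (F x).

Definition TR (h : R -> T) (F : T -> T) : set T :=
  closure (\bigcup_(n in [set: nat]) (iter n F @` range h)).

Definition rpre01 (h : R -> T) : set T :=
  [set t | exists x, 0 <= x < 1 /\ rR h x t].

Definition Xset (h : R -> T) (F : T -> T) : set T :=
  closure (~` TR h F) `&` rpre01 h.

(* F is sun-like, with branches X^i = xi i ([0,1]), i in L, min X^i = xi i 0
   (the order on X^i is the one transported by xi i) *)
Definition sun_like (h : R -> T) (F : T -> T) (L : finType) (xi : L -> R -> T)
  : Prop :=
  (forall i, embedding_on I01 (xi i)) /\
  [/\ (forall i, TR h F (xi i 0)),
      (forall i t, 0 < t <= 1 -> ~ TR h F (xi i t)),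
      (forall i, closure (xi i @` I01l) = xi i @` I01),
      (forall i j, i <> j -> (xi i @` I01) `&` (xi j @` I01) = set0) &
      (~` TR h F) `&` rpre01 h = \bigcup_(i in [set: L]) (xi i @` I01l)].

Definition Aset (L P : finType) (xi : L -> R -> T) (br : P -> L) (a b : P -> R)
  (j : P) : set T := xi (br j) @` [set t | a j <= t <= b j].

Definition basic_partition (h : R -> T) (tau F : T -> T) (L : finType)
  (xi : L -> R -> T) (P : finType) (br : P -> L) (a b : P -> R)
  (lab : P -> L) (pp : P -> int) : Prop :=
  [/\ (forall j, 0 <= a j <= b j /\ b j <= 1),
      (forall j k, j <> k -> Aset xi br a b j `&` Aset xi br a b k = set0),
      (forall j, F @` Aset xi br a b j `<=`
          shiftset tau (xi (lab j) @` I01) (pp j) `|` interior (TR h F)),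
      (forall j, zshift tau (pp j) (xi (lab j) 0) (F (xi (br j) (a j)))) &
      (F @` (Xset h F `\` \bigcup_(j in [set: P]) Aset xi br a b j))
         `&` Zorbit tau (Xset h F) = set0].

(* < A_0 ... A_n > for s = [:: A_0; ...; A_n] *)
Definition cyl (h : R -> T) (tau F : T -> T) (L P : finType) (xi : L -> R -> T)
  (br : P -> L) (a b : P -> R) (s : seq P) : set T :=
  [set y | Xset h F y /\ exists x, y = iter (size s).-1 F x /\
     forall (j0 : P) (i : nat), (i < size s)%N ->
        Zorbit tau (Aset xi br a b (nth j0 s i)) (iter i F x)].

(* A_0...A_n ~ B_0...B_m : the last k+1 symbols agree (A::u) and
   <A_0..A_{n-k}> = A_{n-k} = B_{m-k} = <B_0..B_{m-k}> *)
Definition sim (h : R -> T) (tau F : T -> T) (L P : finType) (xi : L -> R -> T)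
  (br : P -> L) (a b : P -> R) (s t : seq P) : Prop :=
  exists (A : P) (u s' t' : seq P),
    [/\ s = s' ++ A :: u, t = t' ++ A :: u,
        cyl h tau F xi br a b (rcons s' A) = Aset xi br a b A &
        cyl h tau F xi br a b (rcons t' A) = Aset xi br a b A].

(* vertices of the covering graph are ~-classes, represented as sets of words *)
Definition cls (h : R -> T) (tau F : T -> T) (L P : finType) (xi : L -> R -> T)
  (br : P -> L) (a b : P -> R) (s : seq P) : set (seq P) :=
  [set t | sim h tau F xi br a b s t].

Definition vertex (h : R -> T) (tau F : T -> T) (L P : finType) (xi : L -> R -> T)
  (br : P -> L) (a b : P -> R) (al : set (seq P)) : Prop :=
  exists s, s <> [::] /\ cyl h tau F xi br a b s !=set0 /\ al = cls h tau F xi br a b s.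

Definition arrow (h : R -> T) (tau F : T -> T) (L P : finType) (xi : L -> R -> T)
  (br : P -> L) (a b : P -> R) (pp : P -> int) (al be : set (seq P)) (w : int)
  : Prop :=
  [/\ vertex h tau F xi br a b al, vertex h tau F xi br a b be &
      exists (s' : seq P) (B A : P),
        al = cls h tau F xi br a b (rcons s' B) /\
        be = cls h tau F xi br a b (rcons (rcons s' B) A) /\ w = pp B].

Definition has_rho (h : R -> T) (tau F : T -> T) (L P : finType) (xi : L -> R -> T)
  (br : P -> L) (a b : P -> R) (pp : P -> int) (path : nat -> set (seq P)) (r : R)
  : Prop :=
  exists w : nat -> int,
    (forall n, arrow h tau F xi br a b pp (path n) (path n.+1) (w n)) /\
    ((fun n : nat => (\sum_(i < n) w i)%:~R / n%:R) @ \oo --> r).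

Definition loop_at (h : R -> T) (tau F : T -> T) (L P : finType) (xi : L -> R -> T)
  (br : P -> L) (a b : P -> R) (pp : P -> int) (al : set (seq P))
  (n : nat) (g : nat -> set (seq P)) : Prop :=
  [/\ (0 < n)%N, g 0%N = al, g n = al &
      forall i, (i < n)%N -> exists w, arrow h tau F xi br a b pp (g i) (g i.+1) w].

Definition loop_rep (n : nat) (X : Type) (g : nat -> X) : nat -> X :=
  fun k => g (k %% n)%N.

End LiftedGraphs.

(* Main.v *)
Require Import Defs.
From HB Require Import structures.
From mathcomp Require Import all_boot all_order all_algebra.
From mathcomp Require Import all_classical all_reals all_analysis.
From mathcomp Require Import zify ring lra.
Set Implicit Arguments. Unset Strict Implicit. Unset Printing Implicit Defensive.
Import Order.TTheory GRing.Theory Num.Theory.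
Import numFieldTopology.Exports numFieldNormedType.Exports.
Local Open Scope classical_set_scope.
Local Open Scope ring_scope.

Section A.
Variable R : realType.

Lemma cvg_dom (u b : nat -> R) l : b @ \oo --> 0 ->
  (\forall n \near \oo, `|u n - l| <= b n) -> u @ \oo --> l.
Proof.
move=> hb hu; apply/cvgrPdist_le => e e0.
have hb' : \forall n \near \oo, `|b n| <= e by exact: cvgr0_norm_le.
near=> n; rewrite distrC.
have h1 : `|u n - l| <= b n by near: n.
have h2 : `|b n| <= e by near: n.
exact: le_trans h1 (le_trans (ler_norm _) h2).
Unshelve. all: by end_near. Qed.

Lemma cvg_Kn (K : R) : (fun n : nat => K / n%:R) @ \oo --> 0.
Proof.
have h : (fun n : nat => K * harmonic n) @ \oo --> 0.
  by rewrite -(mulr0 K); apply: cvgMr; exact: cvg_harmonic.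
rewrite -(cvg_shiftn 1) /=.
by apply: cvg_trans h; apply: near_eq_cvg; near=> n; rewrite addn1.
Unshelve. all: by end_near. Qed.
Lemma sum_period (w : nat -> int) N : (forall k, w (k + N)%N = w k) ->
  forall q r, \sum_(i < q * N + r) w i = q%:Z * \sum_(i < N) w i + \sum_(i < r) w i.
Proof.
move=> hw; elim=> [|q IH] r; first by rewrite mul0n add0n mul0r add0r.
rewrite mulSn -addnA big_split_ord /=.
rewrite [X in _ + X = _](eq_bigr (fun i : 'I__ => w i)); last by move=> i _; rewrite addnC hw.
rewrite IH -add1n PoszD mulrDl mul1r addrA //.
Qed.

Lemma sum_prefix_le (w : nat -> int) r N : (r <= N)%N ->
  `|\sum_(i < r) w i| <= \sum_(i < N) `|w i|.
Proof.
move=> rN; apply: le_trans (ler_norm_sum _ _ _) _.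
rewrite -(subnKC rN) big_split_ord /= lerDl.
by apply: sumr_ge0 => i _.
Qed.

Lemma period_bound (w : nat -> int) N : (0 < N)%N -> (forall k, w (k + N)%N = w k) ->
  forall n, `|(\sum_(i < n) w i) * N%:Z - n%:Z * \sum_(i < N) w i| <= 2%:Z * N%:Z * \sum_(i < N) `|w i|.
Proof.
move=> N0 hw n.
have -> : \sum_(i < n) w i = \sum_(i < n %/ N * N + n %% N) w i by rewrite -divn_eq.
rewrite sum_period //.
set S := \sum_(i < N) w i; set M := \sum_(i < N) `|w i|.
have -> : n%:Z * S = (n %/ N * N + n %% N)%N%:Z * S by rewrite -divn_eq.
set q := (n %/ N)%N; set r := (n %% N)%N.
have rN : (r < N)%N by rewrite ltn_mod.
have -> : ((q%:Z * S + \sum_(i < r) w i) * N%:Z - (q * N + r)%N%:Z * S)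
   = (\sum_(i < r) w i) * N%:Z - r%:Z * S by rewrite PoszD PoszM; ring.
apply: le_trans (ler_normB _ _) _.
rewrite !normrM !(@ger0_norm _ (Posz _)) //.
have h1 := sum_prefix_le w (ltnW rN).
have h2 := sum_prefix_le w (leqnn N).
have h3 : r%:Z <= N%:Z by rewrite lez_nat ltnW.
have h4 : 0 <= `|\sum_(i < r) w i| by [].
have h5 : 0 <= `|S| by [].
rewrite -/S -/M in h1 h2 *.
nia.
Qed.

Lemma avg_periodic (w : nat -> int) N : (0 < N)%N -> (forall k, w (k + N)%N = w k) ->
  (fun n : nat => (\sum_(i < n) w i)%:~R / n%:R : R) @ \oo --> ((\sum_(i < N) w i)%:~R / N%:R : R).
Proof.
move=> N0 hw.
apply: (cvg_dom (cvg_Kn ((2%:Z * \sum_(i < N) `|w i|)%:~R))).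
near=> n.
have n0 : (0 < n)%N by near: n; exact: nbhs_infty_gt.
have hb := period_bound N0 hw n.
move: hb.
set f := \sum_(i < n) w i; set S := \sum_(i < N) w i; set M := \sum_(i < N) `|w i| => hb.
have -> : f%:~R / n%:R - S%:~R / N%:R = (f * N%:Z - n%:Z * S)%:~R / (n%:R * N%:R) :> R.
  rewrite intrD intrM mulrNz intrM !pmulrn.
  by field; rewrite ?pnatr_eq0 -?lt0n ?n0 ?N0.
have nN : 0 < n%:R * N%:R :> R by rewrite mulr_gt0 // ltr0n.
rewrite normrM normfV (gtr0_norm nN) -intr_norm ler_pdivrMr //.
have -> : (2%:Z * M)%:~R / n%:R * (n%:R * N%:R) = (2%:Z * N%:Z * M)%:~R :> R.
  rewrite !intrM !pmulrn. 
  by field; rewrite ?pnatr_eq0 -?lt0n ?n0 ?N0.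
by rewrite ler_int.
Unshelve. all: by end_near. Qed.

Lemma near_oo_ex (P : nat -> Prop) : (\forall n \near \oo, P n) -> exists N, forall n, (N <= n)%N -> P n.
Proof. by case=> N _ HN; exists N => n Hn; apply: HN. Qed.

Definition gloop (X : Type) (E : X -> X -> int -> Prop) (al : X) (n : nat) (g : nat -> X) :=
  [/\ (0 < n)%N, g 0%N = al, g n = al &
      forall i, (i < n)%N -> exists w, E (g i) (g i.+1) w].

Definition grho (X : Type) (E : X -> X -> int -> Prop) (path : nat -> X) (r : R) :=
  exists w : nat -> int,
    (forall n, E (path n) (path n.+1) (w n)) /\
    ((fun n : nat => (\sum_(i < n) w i)%:~R / n%:R) @ \oo --> r).

Lemma min_int (Q : int -> Prop) (lb : int) : (exists w, Q w) -> (forall w, Q w -> lb <= w) ->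
  exists m, Q m /\ forall w, Q w -> m <= w.
Proof.
move=> [w0 Qw0] hlb.
have ex : exists n : nat, `[< Q (lb + n%:Z) >].
  exists `|w0 - lb|%N; apply/asboolP.
  by rewrite gez0_abs ?subr_ge0 ?hlb // addrCA subrr addr0.
case: (ex_minnP ex) => m /asboolP Qm Hmin.
exists (lb + m%:Z); split => // w Qw.
have := Hmin `|w - lb|%N.
rewrite gez0_abs ?subr_ge0 ?hlb // addrCA subrr addr0 => /(_ (asboolT Qw)).
by rewrite -lez_nat gez0_abs ?subr_ge0 ?hlb // lerBrDl.
Qed.


Definition catf (Y : Type) (A n1 n2 : nat) (f1 f2 : nat -> Y) : nat -> Y :=
  fun k => if (k < A)%N then f1 (k %% n1)%N else f2 ((k - A) %% n2)%N.

Lemma sum_mod (f : nat -> int) n p : (0 < n)%N ->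
  \sum_(i < p * n) f (i %% n)%N = p%:Z * \sum_(i < n) f i.
Proof.
move=> n0.
have := @sum_period (fun i => f (i %% n)%N) n _ p 0.
rewrite addn0 big_ord0 addr0 => ->; last by move=> k; rewrite modnDr.
by congr (_ * _); apply: eq_bigr => i _; rewrite modn_small.
Qed.

Lemma sum_catf (c1 c2 : nat -> int) p n1 q n2 : (0 < n1)%N -> (0 < n2)%N ->
  \sum_(i < p * n1 + q * n2) catf (p * n1) n1 n2 c1 c2 i
  = p%:Z * \sum_(i < n1) c1 i + q%:Z * \sum_(i < n2) c2 i.
Proof.
move=> n10 n20; rewrite big_split_ord /=.
rewrite (eq_bigr (fun i : 'I__ => c1 (i %% n1)%N)); last first.
  by move=> i _; rewrite /catf /= ltn_ord.
rewrite [X in _ + X = _](eq_bigr (fun i : 'I__ => c2 (i %% n2)%N)); last first.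
  by move=> i _; rewrite /catf /= ltnNge leq_addr /= addKn.
by rewrite !sum_mod.
Qed.


Lemma divle_int (a b c d : int) : 0 < b -> 0 < d ->
  (a%:~R / b%:~R <= c%:~R / d%:~R :> R) -> a * d <= c * b.
Proof.
move=> b0 d0; rewrite ler_pdivrMr ?ltr0z // mulrAC ler_pdivlMr ?ltr0z //.
by rewrite -!intrM ler_int.
Qed.


Fixpoint Tsq (Lf : nat -> nat -> nat) (k : nat) : nat :=
  if k is k'.+1 then (Tsq Lf k' + Lf k' (Tsq Lf k'))%N else 0%N.

Fixpoint blk (Tf : nat -> nat) (n : nat) : nat :=
  if n is n'.+1 then
    (let k := blk Tf n' in if (Tf k.+1 <= n'.+1)%N then k.+1 else k)
  else 0%N.

Section Blk.
Variable Tf : nat -> nat.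
Hypothesis T0 : Tf 0%N = 0%N.
Hypothesis Ti : forall k, (Tf k < Tf k.+1)%N.

Lemma T_mono : {homo Tf : i j / (i <= j)%N}.
Proof.
apply: homo_leq => //; [exact: leq_trans| by move=> k; apply: ltnW].
Qed.

Lemma T_ge k : (k <= Tf k)%N.
Proof. by elim: k => [|k IH] //; apply: leq_ltn_trans IH (Ti k). Qed.

Lemma blk_spec n : (Tf (blk Tf n) <= n < Tf (blk Tf n).+1)%N.
Proof.
elim: n => [|n IH] /=; first by rewrite T0 /=; have := Ti 0; rewrite T0.
move: IH; set k := blk Tf n => /andP[h1 h2].
case: ifP => h3.
  have e : Tf k.+1 = n.+1 by apply/eqP; rewrite eqn_leq h3 h2.
  by rewrite e leqnn /= -e Ti.
by rewrite ltnNge h3 (leq_trans h1 (leqnSn n)).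
Qed.

Lemma blk_uniq k n : (Tf k <= n < Tf k.+1)%N -> blk Tf n = k.
Proof.
have /andP[a1 a2] := blk_spec n; move: a1 a2; set k' := blk Tf n => a1 a2 /andP[b1 b2].
apply/eqP; rewrite eqn_leq; apply/andP; split.
  rewrite leqNgt; apply/negP => hk.
  have := T_mono hk; lia.
rewrite leqNgt; apply/negP => hk.
have := T_mono hk; lia.
Qed.
End Blk.

Section Graph.
Variables (X : Type) (E : X -> X -> int -> Prop) (Bd : int).
Hypothesis HE : forall x y w, E x y w -> `|w| <= Bd.

Lemma rep_succ al n g : gloop E al n g -> forall k, g ((k.+1) %% n)%N = g ((k %% n).+1).
Proof.
case=> n0 g0 gn _ k.
have := ltn_pmod k n0.
case: (ltnP (k %% n).+1 n) => h1 h2.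
  by rewrite -addn1 -modnDml modn_small ?addn1.
have e : (k %% n).+1 = n by apply/eqP; rewrite eqn_leq h1 h2.
by rewrite -addn1 -modnDml addn1 e modnn g0 gn.
Qed.

Lemma loop_min al n g : gloop E al n g -> exists c : nat -> int,
  forall i, (i < n)%N -> E (g i) (g i.+1) (c i) /\ forall w, E (g i) (g i.+1) w -> c i <= w.
Proof.
case=> n0 g0 gn hE.
have H : forall i, exists c, (i < n)%N -> E (g i) (g i.+1) c /\ forall w, E (g i) (g i.+1) w -> c <= w.
  move=> i; case: (ltnP i n) => hi; last by exists 0.
  have [|m [Hm1 Hm2]] := min_int (lb := - Bd) (hE i hi).
    by move=> w /HE; rewrite ler_norml => /andP[].
  by exists m.
have [c Hc] := choice H.
by exists c => i hi; apply: Hc.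
Qed.


Lemma loop_max al n g : gloop E al n g -> exists c : nat -> int,
  forall i, (i < n)%N -> E (g i) (g i.+1) (c i) /\ forall w, E (g i) (g i.+1) w -> w <= c i.
Proof.
case=> n0 g0 gn hE.
have H : forall i, exists c, (i < n)%N -> E (g i) (g i.+1) c /\ forall w, E (g i) (g i.+1) w -> w <= c.
  move=> i; case: (ltnP i n) => hi; last by exists 0.
  have ex : exists w, E (g i) (g i.+1) (- w).
    by have [w hw] := hE i hi; exists (- w); rewrite opprK.
  have lbH : forall w, E (g i) (g i.+1) (- w) -> - Bd <= w.
    by move=> w /HE; rewrite normrN ler_norml => /andP[].
  have [m [Hm1 Hm2]] := min_int ex lbH.
  exists (- m) => _; split => // w hw.
  by rewrite lerNr; apply: Hm2; rewrite opprK.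
have [c Hc] := choice H.
by exists c => i hi; apply: Hc.
Qed.

Lemma rho_min al n g c r : gloop E al n g ->
  (forall i, (i < n)%N -> forall w, E (g i) (g i.+1) w -> c i <= w) ->
  grho E (loop_rep n g) r -> ((\sum_(i < n) c i)%:~R / n%:R : R) <= r.
Proof.
move=> hl hc [w [hw hcv]].
have n0 : (0 < n)%N by case: hl.
pose c' := fun k => c (k %% n)%N.
have hp : forall k, c' (k + n)%N = c' k by move=> k; rewrite /c' modnDr.
have hs : \sum_(i < n) c' i = \sum_(i < n) c i by apply: eq_bigr => i _; rewrite /c' modn_small.
rewrite -hs.
apply: (ler_cvg_to (avg_periodic n0 hp) hcv).
apply: nearW => m.
apply: ler_wpM2r; first by rewrite invr_ge0 ler0n.
rewrite ler_int; apply: ler_sum => i _.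
rewrite /c'; apply: hc; first by rewrite ltn_pmod.
by have := hw i; rewrite /loop_rep (rep_succ hl).
Qed.

Lemma rho_max al n g c r : gloop E al n g ->
  (forall i, (i < n)%N -> forall w, E (g i) (g i.+1) w -> w <= c i) ->
  grho E (loop_rep n g) r -> r <= ((\sum_(i < n) c i)%:~R / n%:R : R).
Proof.
move=> hl hc [w [hw hcv]].
have n0 : (0 < n)%N by case: hl.
pose c' := fun k => c (k %% n)%N.
have hp : forall k, c' (k + n)%N = c' k by move=> k; rewrite /c' modnDr.
have hs : \sum_(i < n) c' i = \sum_(i < n) c i by apply: eq_bigr => i _; rewrite /c' modn_small.
rewrite -hs.
apply: (ler_cvg_to hcv (avg_periodic n0 hp)).
apply: nearW => m.
apply: ler_wpM2r; first by rewrite invr_ge0 ler0n.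
rewrite ler_int; apply: ler_sum => i _.
rewrite /c'; apply: hc; first by rewrite ltn_pmod.
by have := hw i; rewrite /loop_rep (rep_succ hl).
Qed.


Lemma cat_loop al n1 g1 n2 g2 (c1 c2 : nat -> int) p q :
  gloop E al n1 g1 -> gloop E al n2 g2 -> (0 < p * n1 + q * n2)%N ->
  (forall i, (i < n1)%N -> E (g1 i) (g1 i.+1) (c1 i)) ->
  (forall i, (i < n2)%N -> E (g2 i) (g2 i.+1) (c2 i)) ->
  gloop E al (p * n1 + q * n2) (catf (p * n1) n1 n2 g1 g2) /\
  forall i, (i < p * n1 + q * n2)%N ->
    E (catf (p * n1) n1 n2 g1 g2 i) (catf (p * n1) n1 n2 g1 g2 i.+1) (catf (p * n1) n1 n2 c1 c2 i).
Proof.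
move=> h1 h2 N0 hc1 hc2.
have [n10 g10 g1n _] := h1; have [n20 g20 g2n _] := h2.
set A := (p * n1)%N.
have step : forall i, (i < A + q * n2)%N ->
    E (catf A n1 n2 g1 g2 i) (catf A n1 n2 g1 g2 i.+1) (catf A n1 n2 c1 c2 i).
  move=> i hi; rewrite /catf.
  case: (ltnP i A) => h.
    have -> : (if (i.+1 < A)%N then g1 (i.+1 %% n1)%N else g2 ((i.+1 - A) %% n2)%N)
              = g1 ((i %% n1).+1).
      rewrite -(rep_succ h1).
      case: (ltnP i.+1 A) => h' //.
      have ei : i.+1 = A by apply/eqP; rewrite eqn_leq h h'.
      by rewrite ei subnn mod0n g20 /A modnMl g10.
    by apply: hc1; rewrite ltn_pmod.
  rewrite ltnNge (leq_trans h (leqnSn i)) /= subSn //.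
  rewrite (rep_succ h2); apply: hc2; rewrite ltn_pmod //.
split => //; split => //.
- rewrite /catf; case: ifP => _; first by rewrite mod0n.
  by rewrite sub0n mod0n.
- by rewrite /catf ltnNge leq_addr /= addKn modnMl.
- by move=> i hi; exists (catf A n1 n2 c1 c2 i); apply: step.
Qed.


Lemma part1 al n1 n2 g1 g2 r1 r2 (rq : rat) :
  gloop E al n1 g1 -> gloop E al n2 g2 ->
  grho E (loop_rep n1 g1) r1 -> grho E (loop_rep n2 g2) r2 ->
  r1 <= ratr rq <= r2 ->
  exists n g, gloop E al n g /\ grho E (loop_rep n g) (ratr rq).
Proof.
move=> h1 h2 hr1 hr2 /andP[le1 le2].
have [n10 _ _ _] := h1; have [n20 _ _ _] := h2.
have [c1 hc1] := loop_min h1; have [c2 hc2] := loop_max h2.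
have l1 := rho_min h1 (fun i hi => proj2 (hc1 i hi)) hr1.
have l2 := rho_max h2 (fun i hi => proj2 (hc2 i hi)) hr2.
set m1 := \sum_(i < n1) c1 i in l1; set M2 := \sum_(i < n2) c2 i in l2.
set u := numq rq; set v := denq rq.
have v0 : 0 < v := denq_gt0 rq.
have ha : m1 * v <= u * n1%:Z.
  apply: divle_int => //.
  exact: (le_trans l1 le1).
have hb : u * n2%:Z <= M2 * v.
  apply: divle_int => //.
  exact: (le_trans le2 l2).
have [p [q [Hpq Hid]]] : exists p q : nat, (0 < p * n1 + q * n2)%N /\
    v * (p%:Z * m1 + q%:Z * M2) = u * (p * n1 + q * n2)%N%:Z.
  set a := u * n1%:Z - m1 * v; set b := M2 * v - u * n2%:Z.
  have a0 : 0 <= a by rewrite subr_ge0.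
  have b0 : 0 <= b by rewrite subr_ge0.
  case: (boolP ((a == 0) && (b == 0))) => [/andP[/eqP ea /eqP eb]|hab].
    exists 1%N, 1%N; split; first by rewrite !mul1n addn_gt0 n10.
    rewrite PoszD !PoszM.
    move: ea eb; rewrite /a /b => ea eb.
    have ea' : u * n1%:Z = m1 * v by apply/eqP; rewrite -subr_eq0 ea.
    have eb' : M2 * v = u * n2%:Z by apply/eqP; rewrite -subr_eq0 eb.
    rewrite mulrDr mulrDr !mul1r [v * m1]mulrC -ea' [v * M2]mulrC eb'.
    ring.
  exists `|b|%N, `|a|%N; split.
    move: hab; rewrite negb_and => /orP[] hne.
      rewrite addn_gt0; apply/orP; right; rewrite muln_gt0 n20 andbT absz_gt0 //.
    rewrite addn_gt0; apply/orP; left; rewrite muln_gt0 n10 andbT absz_gt0 //.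
  rewrite PoszD !PoszM !gez0_abs // /a /b; ring.
have [hl hst] := cat_loop h1 h2 Hpq (fun i hi => proj1 (hc1 i hi)) (fun i hi => proj1 (hc2 i hi)).
set N := (p * n1 + q * n2)%N in Hpq Hid hl hst.
set g := catf (p * n1) n1 n2 g1 g2 in hl hst.
set c := catf (p * n1) n1 n2 c1 c2 in hst.
exists N, g; split => //.
pose cw := fun k => c (k %% N)%N.
exists cw; split.
  by move=> k; rewrite /loop_rep /cw (rep_succ hl); apply: hst; rewrite ltn_pmod.
have hp : forall k, cw (k + N)%N = cw k by move=> k; rewrite /cw modnDr.
have -> : ratr rq = (\sum_(i < N) cw i)%:~R / N%:R :> R.
  have -> : \sum_(i < N) cw i = p%:Z * m1 + q%:Z * M2.
    rewrite -sum_catf //; apply: eq_bigr => i _; rewrite /cw modn_small //.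
  rewrite /ratr -/u -/v; apply/eqP.
  rewrite pmulrn eqr_div; last 2 first.
  - by rewrite intr_eq0 gt_eqF.
  - by rewrite intr_eq0 -lt0n.
  by rewrite -!intrM eqr_int [X in _ == X]mulrC -Hid.
exact: avg_periodic.
Qed.


Lemma sum5 (x1 x2 x3 x4 x5 y1 y2 y3 y4 y5 : R) : x1 <= y1 -> x2 <= y4 -> x3 <= y2 ->
  x4 <= y5 -> x5 <= y3 -> x1 + (x2 + x3) + (x4 + x5) <= y1 + y2 + y3 + y4 + y5.
Proof. by move=> *; lra. Qed.

Lemma natdiv_le (K x n : nat) : (0 < K)%N -> (K * x <= n)%N -> (x%:R : R) <= n%:R / K%:R.
Proof.
move=> K0 h; rewrite ler_pdivlMr ?ltr0n // -natrM ler_nat mulnC //.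
Qed.

Lemma part2 al (ns : nat -> nat) (gs : nat -> nat -> X) (rhos : nat -> R) (s : R) :
  (forall k, gloop E al (ns k) (gs k)) ->
  (forall k, grho E (loop_rep (ns k) (gs k)) (rhos k)) ->
  rhos @ \oo --> s ->
  exists path : nat -> X, [/\ path 0%N = al,
     (forall N, exists2 m, (N <= m)%N & path m = al) & grho E path s].
Proof.
move=> hl hr hcv.
have [ws hws] := choice hr.
have hJ : forall k, exists J : nat, forall j, (J <= j)%N ->
    `|rhos k - (\sum_(i < j) ws k i)%:~R / j%:R| <= (k.+1%:R)^-1.
  move=> k; apply: near_oo_ex.
  have [_ /cvgrPdist_le h] := hws k.
  by apply: h; rewrite invr_gt0 ltr0n.
have [Jf hJf] := choice hJ.
pose Cr : R := (`|Bd|)%:~R + `|s|.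
have Cr0 : 0 <= Cr by rewrite /Cr addr_ge0 // ler0z.
have [Cn hCn] : exists Cn : nat, Cr <= Cn%:R.
  by exists (Num.bound Cr); apply: ltW; apply: archi_boundP.
pose Lf := fun k T => (ns k * (1 + k.+1 * T + k.+1 * (Jf k * Cn) + k.+2 * (Jf k.+1 * Cn)))%N.
pose T := Tsq Lf.
have ns0 : forall k, (0 < ns k)%N by move=> k; case: (hl k).
have Lpos : forall k, (0 < Lf k (T k))%N by move=> k; rewrite /Lf muln_gt0 ns0.
have T0 : T 0%N = 0%N by [].
have TS : forall k, T k.+1 = (T k + Lf k (T k))%N by [].
have Ti : forall k, (T k < T k.+1)%N by move=> k; rewrite TS -addn1 leq_add2l Lpos.
pose bk := blk T.
pose path := fun n => gs (bk n) ((n - T (bk n)) %% ns (bk n))%N.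
pose W := fun n => ws (bk n) (n - T (bk n))%N.
have bkT : forall k j, (j < Lf k (T k))%N -> bk (T k + j)%N = k.
  by move=> k j hj; apply: blk_uniq => //; rewrite leq_addr /= TS ltn_add2l.
have pathT : forall k j, (j < Lf k (T k))%N -> path (T k + j)%N = loop_rep (ns k) (gs k) j.
  by move=> k j hj; rewrite /path bkT // addKn.
have WT : forall k j, (j < Lf k (T k))%N -> W (T k + j)%N = ws k j.
  by move=> k j hj; rewrite /W bkT // addKn.
have pathTk : forall k, path (T k) = al.
  move=> k; have := pathT k 0%N (Lpos k); rewrite addn0 => ->.
  by rewrite /loop_rep mod0n; case: (hl k).
exists path; split.
- exact: (pathTk 0%N).
- by move=> N; exists (T N); [apply: T_ge | apply: pathTk].
exists W; split.
  move=> n.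
  have /andP[h1 h2] := blk_spec T0 Ti n.
  rewrite -/bk in h1 h2.
  move: h1 h2; set k := bk n => h1 h2.
  set j := (n - T k)%N.
  have hn : n = (T k + j)%N by rewrite subnKC.
  have hj : (j < Lf k (T k))%N by move: h2; rewrite TS /j; lia.
  have [harr _] := hws k.
  have := harr j.
  rewrite hn (pathT _ _ hj) (WT _ _ hj) -addnS.
  case: (ltnP j.+1 (Lf k (T k))) => hj'; first by rewrite pathT.
  have ej : j.+1 = Lf k (T k) by apply/eqP; rewrite eqn_leq hj hj'.
  rewrite ej -TS pathTk /loop_rep /Lf modnMr.
  by case: (hl k) => _ ->.
pose D := fun n => \sum_(i < n) ((W i)%:~R - s) : R.
pose a := fun k j => \sum_(i < j) ((ws k i)%:~R - s) : R.
have wb : forall k i, `|(ws k i)%:~R - s| <= Cr.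
  move=> k i; have [harr _] := hws k; have hb := HE (harr i).
  apply: le_trans (ler_normB _ _) _; rewrite /Cr lerD2r -intr_norm ler_int.
  exact: le_trans hb (ler_norm _).
have Dbound : forall n, `|D n| <= n%:R * Cr.
  move=> n; apply: le_trans (ler_norm_sum _ _ _) _.
  apply: (@le_trans _ _ (\sum_(i < n) Cr)); first by apply: ler_sum => i _; apply: wb.
  by rewrite sumr_const card_ord mulr_natl.
have Dblock : forall k j, (j <= Lf k (T k))%N -> D (T k + j)%N = D (T k) + a k j.
  move=> k; elim=> [|j IH] hj; first by rewrite addn0 /a big_ord0 addr0.
  rewrite addnS /D big_ord_recr /= -/(D _) IH ?(ltnW hj) // WT //.
  have ea : a k j.+1 = a k j + ((ws k j)%:~R - s) by rewrite /a big_ord_recr. 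
  by rewrite ea [RHS]addrA.
pose eta := fun k => `|rhos k - s| + (k.+1%:R)^-1.
have eta0 : forall k, 0 <= eta k by move=> k; rewrite addr_ge0 // invr_ge0 ler0n.
have abound : forall k j, `|a k j| <= j%:R * eta k + (Jf k)%:R * Cr.
  move=> k j.
  case: (ltnP j (Jf k)) => hj.
    apply: le_trans (ler_norm_sum _ _ _) _.
    apply: (@le_trans _ _ (\sum_(i < j) Cr)); first by apply: ler_sum => i _; apply: wb.
    rewrite sumr_const card_ord -mulr_natl.
    rewrite -[X in X <= _]add0r; apply: lerD; first by rewrite mulr_ge0.
    by rewrite -[Cr *+ j]mulr_natl; apply: ler_wpM2r => //; rewrite ler_nat ltnW.
  case: (posnP j) => [->|j0].
    by rewrite /a big_ord0 normr0 addr_ge0 // mulr_ge0.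
  have e : a k j = j%:R * ((\sum_(i < j) ws k i)%:~R / j%:R - s).
    rewrite /a sumrB sumr_const card_ord -mulr_natl mulrz_sumr.
    rewrite -[s *+ j]mulr_natl; field; by rewrite ?mulr1 pnatr_eq0 -lt0n.
  rewrite e normrM normr_nat.
  apply: le_trans (_ : j%:R * eta k <= _); last by rewrite lerDl mulr_ge0.
  apply: ler_wpM2l => //.
  have h := hJf k j hj.
  set av := (\sum_(i < j) ws k i)%:~R / j%:R in h *.
  have -> : av - s = (rhos k - s) - (rhos k - av) by ring.
  apply: le_trans (ler_normB _ _) _.
  by rewrite /eta lerD2l.
pose beta := fun k => (Cn%:R + 2) / k.+1%:R + eta k + eta k.+1.
have main : forall n, (T 1%N <= n)%N -> `|D n| <= n%:R * beta (bk n).-1.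
  move=> n hn.
  have /andP[h1 h2] := blk_spec T0 Ti n.
  rewrite -/bk in h1 h2.
  move: h1 h2; case ek: (bk n) => [|k] h1 h2.
    by move: h2; rewrite ltnNge hn.
  rewrite [(k.+1).-1]/=.
  set j := (n - T k.+1)%N.
  have hnj : n = (T k.+1 + j)%N by rewrite subnKC.
  have hj : (j < Lf k.+1 (T k.+1))%N by move: h2; rewrite TS /j; lia.
  pose L := Lf k (T k).
  have hD : D n = D (T k) + a k L + a k.+1 j.
    rewrite hnj Dblock; last exact: ltnW.
    rewrite TS Dblock; last exact: leqnn.
    reflexivity.
  have K0 : (0 < k.+1)%N by [].
  have fL : forall x, (x <= 1 + k.+1 * T k + k.+1 * (Jf k * Cn) + k.+2 * (Jf k.+1 * Cn))%N -> (x <= n)%N.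
    move=> x hx; apply: leq_trans hx _; apply: leq_trans (leq_pmull _ (ns0 k)) _.
    rewrite hnj TS; apply: leq_trans _ (leq_addr j _); exact: leq_addl.
  have f1 : (k.+1 * T k <= n)%N.
    apply: fL; exact: leq_trans (leq_addl 1 _) (leq_trans (leq_addr _ _) (leq_addr _ _)).
  have f2 : (k.+1 * (Jf k * Cn) <= n)%N.
    apply: fL; exact: leq_trans (leq_addl _ _) (leq_addr _ _).
  have f3 : (k.+1 * (Jf k.+1 * Cn) <= n)%N.
    apply: fL; apply: leq_trans (leq_mul (leqnSn k.+1) (leqnn _)) _.
    exact: leq_addl.
  have f4 : (L <= n)%N by rewrite hnj TS; apply: leq_trans (leq_addl (T k) L) (leq_addr j _).
  have f5 : (j <= n)%N by rewrite hnj; apply: leq_addl.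
  have g1 := natdiv_le K0 f1.
  have g2 := natdiv_le K0 f2.
  have g3 := natdiv_le K0 f3.
  have g4 : (L%:R : R) <= n%:R by rewrite ler_nat.
  have g5 : (j%:R : R) <= n%:R by rewrite ler_nat.
  rewrite !natrM in g2 g3.
  have b1 := Dbound (T k).
  have b2 := abound k L.
  have b3 := abound k.+1 j.
  have e1 := eta0 k; have e2 := eta0 k.+1.
  have c1 : 0 <= (Cn%:R : R) by [].
  have p1 : 0 <= (T k)%:R :> R by [].
  have p2 : 0 <= (Jf k)%:R :> R by [].
  have p3 : 0 <= (Jf k.+1)%:R :> R by [].
  have h4 : (T k)%:R * Cr <= (T k)%:R * Cn%:R by apply: ler_wpM2l.
  have h5 : (Jf k)%:R * Cr <= (Jf k)%:R * Cn%:R by apply: ler_wpM2l.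
  have h6 : (Jf k.+1)%:R * Cr <= (Jf k.+1)%:R * Cn%:R by apply: ler_wpM2l.
  have h7 : (T k)%:R * Cn%:R <= n%:R / k.+1%:R * Cn%:R :> R by apply: ler_wpM2r.
  have h8 : L%:R * eta k <= n%:R * eta k by apply: ler_wpM2r.
  have h9 : j%:R * eta k.+1 <= n%:R * eta k.+1 by apply: ler_wpM2r.
  have -> : n%:R * beta k = n%:R / k.+1%:R * Cn%:R + n%:R / k.+1%:R + n%:R / k.+1%:R
       + n%:R * eta k + n%:R * eta k.+1.
    by rewrite /beta; field.
  rewrite hD.
  apply: le_trans (ler_normD _ _) _.
  apply: le_trans (lerD (ler_normD _ _) (lexx _)) _.
  apply: le_trans (lerD (lerD b1 b2) b3) _; apply: sum5.
  - exact: le_trans h4 h7.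
  - exact: h8.
  - exact: le_trans h5 g2.
  - exact: h9.
  - exact: le_trans h6 g3.
have avgD : forall n, (0 < n)%N -> (\sum_(i < n) W i)%:~R / n%:R - s = D n / n%:R.
  move=> n n0; rewrite /D sumrB sumr_const card_ord mulrz_sumr -[s *+ n]mulr_natl.
  by field; rewrite pnatr_eq0 -lt0n.
have hr0 : (fun k => `|rhos k - s|) @ \oo --> 0.
  move/cvgrPdist_le: hcv => hcv'; apply/cvgrPdist_le => e e0.
  by apply: filterS (hcv' e e0) => k; rewrite sub0r normrN normr_id distrC.
have heta : eta @ \oo --> 0.
  have := cvgD hr0 cvg_harmonic; rewrite addr0; exact.
have heta' : (fun k => eta k.+1) @ \oo --> 0 by rewrite (cvg_shiftS eta).
have hK : (fun k : nat => (Cn%:R + 2) / k.+1%:R) @ \oo --> (0 : R).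
  rewrite -(mulr0 (Cn%:R + 2)); apply: cvgMr; exact: cvg_harmonic.
have hbeta : beta @ \oo --> 0.
  by have := cvgD (cvgD hK heta) heta'; rewrite !addr0; exact.
have hbk : (fun n => (bk n).-1) @ \oo --> \oo.
  apply/cvgnyPge => A; near=> n.
  have hn : (T A.+1 <= n)%N by near: n; apply: nbhs_infty_ge.
  have /andP[_ h2] := blk_spec T0 Ti n.
  rewrite -/bk in h2.
  rewrite leqNgt; apply/negP => h.
  have : ((bk n).+1 <= A.+1)%N by move: h; case: (bk n) => //.
  move/(T_mono Ti) => h3.
  by move: (leq_trans h2 h3); rewrite ltnNge hn.
apply: (cvg_dom (b := fun n => beta (bk n).-1)).
  exact: (@cvg_comp _ _ _ _ _ _ _ _ hbk hbeta).
near=> n.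
have hn : (T 1%N <= n)%N by near: n; apply: nbhs_infty_ge.
have n0 : (0 < n)%N by apply: leq_trans hn; have := Ti 0%N; rewrite T0.
rewrite avgD // normrM normfV normr_nat ler_pdivrMr ?ltr0n // mulrC.
exact: main.
Unshelve. all: by end_near. Qed.


End Graph.
End A.

Theorem mainTheorem14 (R : realType) (T : topologicalType)
  (h : R -> T) (tau F : T -> T) (L : finType) (xi : L -> R -> T)
  (P : finType) (br : P -> L) (a b : P -> R) (lab : P -> L) (pp : P -> int) :
  lifted_graph h tau ->
  continuous F ->
  degree_one tau F ->
  sun_like h F xi ->
  basic_partition h tau F xi br a b lab pp ->
  (* (i) *)
  (forall (al : set (seq P)) (n1 n2 : nat) (g1 g2 : nat -> set (seq P))
          (r1 r2 r : R),
     loop_at h tau F xi br a b pp al n1 g1 ->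
     loop_at h tau F xi br a b pp al n2 g2 ->
     has_rho h tau F xi br a b pp (loop_rep n1 g1) r1 ->
     has_rho h tau F xi br a b pp (loop_rep n2 g2) r2 ->
     r1 <= r <= r2 -> (exists q : rat, r = ratr q) ->
     exists (n : nat) (g : nat -> set (seq P)),
       loop_at h tau F xi br a b pp al n g /\
       has_rho h tau F xi br a b pp (loop_rep n g) r) /\
  (* (ii) *)
  (forall (al : set (seq P)) (ns : nat -> nat) (gs : nat -> nat -> set (seq P))
          (rhos : nat -> R) (s : R),
     vertex h tau F xi br a b al ->
     (forall k, loop_at h tau F xi br a b pp al (ns k) (gs k)) ->
     (forall k, has_rho h tau F xi br a b pp (loop_rep (ns k) (gs k)) (rhos k)) ->
     rhos @ \oo --> s ->
     exists path : nat -> set (seq P),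
       [/\ path 0%N = al,
           (forall N, exists2 m, (N <= m)%N & path m = al) &
           has_rho h tau F xi br a b pp path s]).
Proof.
move=> _ _ _ _ _.
have HE : forall x y w, arrow h tau F xi br a b pp x y w -> `|w| <= \sum_(B : P) `|pp B|.
  move=> x y w [_ _ [s' [B [A [_ [_ ->]]]]]].
  by rewrite (bigD1 B) //= lerDl; apply: sumr_ge0.
split.
- move=> al n1 n2 g1 g2 r1 r2 r h1 h2 hr1 hr2 hr [q eq]; subst r.
  exact: (part1 HE h1 h2 hr1 hr2 hr).
- move=> al ns gs rhos s _ hl hr hcv.
  exact: (part2 HE hl hr hcv).
Qed.
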